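(* Let $w\in\Sigma^n$. If $\mathtt{BR}(w)$ contains no rich word, then $|\mathrm{Alph}(w)|<n-1$.
   Context: $\Sigma$ is an alphabet and $\Sigma^n$ the set of words of length $n$ over it. For a word $w=w_1\cdots w_n$, $w^R=w_n\cdots w_1$; $w$ is a palindrome if $w=w^R$; a factor of $w$ is a word $u$ with $w=puq$. A word $w$ is rich if the number of distinct nonempty palindromic factors of $w$ equals $|w|$. $\mathrm{Alph}(w)$ is the set of letters occurring in $w$. The block reversal of a nonempty word $w$ is $\mathtt{BR}(w)=\{B_t\cdots B_1 : w=B_1\cdots B_t,\ t\ge1,\ \text{each } B_i \text{ nonempty}\}$. *)

(* Defs.v *)
From mathcomp Require Import all_boot.
Set Implicit Arguments. Unset Strict Implicit. Unset Printing Implicit Defensive.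

Definition is_palindrome (T : eqType) (u : seq T) : bool := u == rev u.

Definition factors (T : eqType) (w : seq T) : seq (seq T) :=
  [seq drop i (take j w) | i <- iota 0 (size w).+1, j <- iota 0 (size w).+1].

Definition pal_factors (T : eqType) (w : seq T) : seq (seq T) :=
  undup [seq u <- factors w | (u != [::]) && is_palindrome u].

Definition rich (T : eqType) (w : seq T) : bool :=
  size (pal_factors w) == size w.

Definition alph (T : eqType) (w : seq T) : seq T := undup w.

Definition in_BR (T : eqType) (w v : seq T) : Prop :=
  exists bs : seq (seq T),
    [/\ bs != [::], all (fun b => b != [::]) bs, flatten bs = w
      & v = flatten (rev bs)].

(* Main.v *)
Require Import Defs.
From mathcomp Require Import all_boot.
From mathcomp Require Import zify.

Lemma mem_factors (T : eqType) (u w : seq T) : (u \in factors w) = infix u w.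
Proof.
apply/idP/idP.
  case/allpairsP => [[i j] [_ _ ->]] /=.
  exact: infix_trans (infix_drop _ _) (infix_take _ _).
case/infixP => [s [s' ->]].
apply/allpairsP; exists (size s, size s + size u) => /=; split.
- by rewrite (_ : 0 :: iota 1 _ = iota 0 (size (s ++ u ++ s')).+1) // mem_iota !size_cat; lia.
- by rewrite (_ : 0 :: iota 1 _ = iota 0 (size (s ++ u ++ s')).+1) // mem_iota !size_cat; lia.
- by rewrite catA take_size_cat ?size_cat // drop_size_cat.
Qed.

Lemma mem_pal (T : eqType) (u w : seq T) :
  (u \in pal_factors w) = [&& u != [::], is_palindrome u & infix u w].
Proof.
by rewrite /pal_factors mem_undup mem_filter mem_factors andbA.
Qed.

Lemma pal_shape (T : eqType) (c : T) (u : seq T) :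
  is_palindrome (c :: u) -> u = [::] \/ exists m, u = rcons m c.
Proof.
case/lastP: u => [|m d]; first by left.
rewrite /is_palindrome rev_cons rev_rcons /= => /eqP [-> _]; right; by exists m.
Qed.

Lemma rich_of_perm (T : eqType) (v : seq T) (S : seq (seq T)) :
  uniq S -> size S = size v -> pal_factors v =i S -> rich v.
Proof.
move=> US HS E; rewrite /rich -HS.
by rewrite (perm_size (uniq_perm (undup_uniq _) US E)).
Qed.

Lemma rich_uniq (T : eqType) (v : seq T) : uniq v -> rich v.
Proof.
move=> Uv; apply: (@rich_of_perm _ _ [seq [:: c] | c <- v]).
- by rewrite map_inj_uniq // => x y [].
- by rewrite size_map.
move=> u; rewrite mem_pal; apply/idP/idP.
  case: u => [|c u] //= /andP [P I].
  case: (@pal_shape _ _ _ P) => [Eu|[m Em]].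
    by subst u; apply/mapP; exists c => //; rewrite -infix1s.
  subst u; case/infixP: I => [s [s' Ev]]; subst v.
  move: Uv; rewrite !cat_uniq /= mem_rcons in_cons eqxx /=.
  by rewrite !andbF.
case/mapP => c Hc ->. rewrite /= /is_palindrome /= infix1s Hc. by rewrite andbT.
Qed.

Lemma split_first (T : eqType) (a : T) s1 s r1 r2 :
  a \notin s1 -> a \notin s -> s1 ++ a :: r1 = s ++ a :: r2 -> r1 = r2.
Proof.
elim: s1 s => [|x s1 IH] [|y s] //=.
- by move=> _ _ [].
- by rewrite in_cons negb_or => _ /andP [/eqP H _] [E _]; case: (H E).
- by rewrite in_cons negb_or => /andP [/eqP H _] _ [E _]; case: (H (esym E)).
- rewrite !in_cons !negb_or => /andP [_ H1] /andP [_ H2] [_].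
  exact: IH.
Qed.

Lemma rich_double (T : eqType) (s1 : seq T) a s2 :
  uniq (s1 ++ a :: s2) -> rich (s1 ++ a :: a :: s2).
Proof.
move=> U.
have cnt c : count_mem c (s1 ++ a :: s2) <= 1.
  by rewrite count_uniq_mem // leq_b1.
have ca : count_mem a (s1 ++ a :: s2) = 1.
  by rewrite count_uniq_mem // mem_cat in_cons eqxx orbT.
apply: (@rich_of_perm _ _ ([:: a; a] :: [seq [:: c] | c <- s1 ++ a :: s2])).
- rewrite /= map_inj_uniq; last by move=> x y [].
  rewrite U andbT; apply/mapP => [[c _]] //.
- rewrite /= size_map !size_cat /=. by rewrite !addnS.
move=> u; rewrite mem_pal in_cons; apply/idP/idP.
  case: u => [|c u] //= /andP [P I].
  case: (@pal_shape _ _ _ P) => [Eu|[m Em]].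
    subst u; apply/orP; right; apply/mapP; exists c => //.
    move: I; rewrite infix1s !mem_cat !in_cons.
    by case: (c == a) => //=; rewrite orbT.
  subst u; case/infixP: I => [s [s' Ev]].
  have cV : count_mem c (s1 ++ a :: a :: s2) >= 2.
    rewrite Ev !count_cat /= -cats1 !count_cat /= eqxx; lia.
  have Ec : c = a.
    move: (cnt c) cV; rewrite !count_cat /=.
    case: eqP => // _; lia.
  subst c.
  have c2 : count_mem a (s1 ++ a :: a :: s2) = 2.
    move: ca; rewrite !count_cat /= eqxx; lia.
  move: c2; rewrite Ev !count_cat /= -cats1 !count_cat /= eqxx => c2.
  have ns : a \notin s by apply/count_memPn; lia.
  have nm : a \notin m by apply/count_memPn; lia.
  have ns1 : a \notin s1.
    by apply/count_memPn; move: ca; rewrite count_cat /= eqxx; lia.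
  move: Ev; rewrite -cats1 /= -catA /= => /(@split_first _ _ _ _ _ _ ns1 ns) Ev.
  suff Em : m = [::] by rewrite Em /= eqxx.
  clear P c2; move: Ev; case: m nm => [|x m] //; rewrite in_cons negb_or => /andP [H _] [E _].
  by rewrite E eqxx in H.
case/orP => [/eqP ->|].
  rewrite /= /is_palindrome /= eqxx /=; apply: infix_catl; exact: (prefix_infix [:: a; a] s2).
case/mapP => c Hc ->; rewrite /= /is_palindrome /= infix1s eqxx /=.
move: Hc; rewrite !mem_cat !in_cons; by case: (c == a); rewrite /= ?orbT.
Qed.

Lemma decomp (T : eqType) (w : seq T) :
  size w <= (size (undup w)).+1 ->
  uniq w \/ exists p a q r, w = p ++ a :: q ++ a :: r /\ uniq (p ++ a :: q ++ r).
Proof.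
elim: w => [|x w IH] /=; first by left.
case Hx: (x \in w) => /= Hs.
  have Uw : uniq w.
    rewrite (uniq_size_uniq (undup_uniq w)); last by move=> y; rewrite mem_undup.
    by rewrite eqn_leq size_undup /=; lia.
  right; case/splitPr: Hx Uw => q r Uw.
  exists [::], x, q, r; split => //.
  rewrite (perm_uniq (_ : perm_eq _ (q ++ x :: r))) //.
  by apply/permP => f; rewrite /= !count_cat /=; lia.
case: (IH Hs) => [Uw|[p [a [q [r [Ew U]]]]]].
  by left.
right; exists (x :: p), a, q, r; split; first by rewrite Ew.
rewrite /= U andbT; move: Hx; rewrite Ew !mem_cat !in_cons.
rewrite !mem_cat !in_cons.
by case: (x \in p); case: (x == a); case: (x \in q); case: (x \in r).
Qed.

Lemma flatten_filter_nil (T : eqType) (l : seq (seq T)) :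
  flatten (filter (fun b => b != [::]) l) = flatten l.
Proof. by elim: l => //= b l IH; case: b => //= x b; rewrite IH. Qed.

Theorem mainTheorem3 (T : eqType) (n : nat) (w : seq T) :
  size w = n ->
  w != [::] ->
  (forall v : seq T, in_BR w v -> ~~ rich v) ->
  size (alph w) < n - 1.
Proof.
move=> Hn wne H; rewrite ltnNge; apply/negP => Hle.
have Hs : size w <= (size (undup w)).+1 by rewrite /alph in Hle; lia.
case: (@decomp _ _ Hs) => [Uw|[p [a [q [r [Ew U]]]]]].
  have : in_BR w w. { exists [:: w]; split => //; rewrite /= ?cats0 ?andbT //. }
  by move/H; rewrite rich_uniq.
pose l := [:: p; a :: q; [:: a]; r].
have : in_BR w (r ++ a :: a :: (q ++ p)).
  exists (filter (fun b => b != [::]) l); split.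
  - apply/negP => /eqP E.
    have : a :: q \in filter (fun b => b != [::]) l.
      by rewrite mem_filter /= !in_cons eqxx orbT.
    by rewrite E.
  - exact: filter_all.
  - by rewrite flatten_filter_nil Ew /= cats0.
  - by rewrite -filter_rev flatten_filter_nil /l /rev /= cats0.
move/H; rewrite rich_double //.
rewrite (perm_uniq (_ : perm_eq _ (p ++ a :: q ++ r))) //.
apply/permP => f; rewrite !count_cat /= !count_cat.
move: (nat_of_bool (f a)) (count f r) (count f q) (count f p) => k x y z; lia.
Qed.
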